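(* Let $A$ be a finite nonempty set of actions and $\boldsymbol{v}^0,\boldsymbol{v}^1,\dots\in\mathbb{R}^{|A|}$ an arbitrary sequence of value vectors. If $\boldsymbol{\sigma}^0,\boldsymbol{\sigma}^1,\dots$ is the sequence of regret-matching policies, or the sequence of regret-matching$^+$ policies, generated from $\boldsymbol{v}^0,\boldsymbol{v}^1,\dots$, then for all $t\ge 0$, $$\boldsymbol{\sigma}^{t+1}\cdot\boldsymbol{v}^t\ge\boldsymbol{\sigma}^t\cdot\boldsymbol{v}^t.$$
   Context: For $x\in\mathbb{R}$, $x^+:=\max(x,0)$, applied componentwise to vectors. Define $\boldsymbol{\sigma}_{\mathrm{rm}}(\boldsymbol{x}):=\boldsymbol{x}^+/(\boldsymbol{1}\cdot\boldsymbol{x}^+)$ if some $x_a>0$, and $\boldsymbol{1}/|A|$ otherwise. Regret-matching: $\boldsymbol{r}^0=\boldsymbol{0}$, $\boldsymbol{\sigma}^t=\boldsymbol{\sigma}_{\mathrm{rm}}(\boldsymbol{r}^t)$, $\boldsymbol{r}^{t+1}=\boldsymbol{r}^t+\boldsymbol{v}^t-(\boldsymbol{\sigma}^t\cdot\boldsymbol{v}^t)\boldsymbol{1}$. Regret-matching$^+$: $\boldsymbol{q}^0=\boldsymbol{0}$, $\boldsymbol{\sigma}^t=\boldsymbol{\sigma}_{\mathrm{rm}}(\boldsymbol{q}^t)$, $\boldsymbol{q}^{t+1}=\bigl(\boldsymbol{q}^t+\boldsymbol{v}^t-(\boldsymbol{\sigma}^t\cdot\boldsymbol{v}^t)\boldsymbol{1}\bigr)^+$.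 *)

(* Defs.v *)
From mathcomp Require Import all_boot all_order all_algebra.
Set Implicit Arguments. Unset Strict Implicit. Unset Printing Implicit Defensive.
Import Order.TTheory GRing.Theory Num.Theory.
Local Open Scope ring_scope.

Section RM.
Variables (R : realFieldType) (A : finType).

Definition pos_part (x : R) : R := Num.max x 0.

Definition dot (x y : A -> R) : R := \sum_(a : A) x a * y a.

Definition sigma_rm (x : A -> R) : A -> R :=
  if [exists a, 0 < x a]
  then fun a => pos_part (x a) / (\sum_(b : A) pos_part (x b))
  else fun _ => (#|A|%:R)^-1.

Fixpoint rm_regret (v : nat -> A -> R) (t : nat) : A -> R :=
  match t with
  | 0 => fun _ => 0
  | t'.+1 => let r := rm_regret v t' in
             fun a => r a + v t' a - dot (sigma_rm r) (v t')
  end.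

Definition rm_policy (v : nat -> A -> R) (t : nat) : A -> R :=
  sigma_rm (rm_regret v t).

Fixpoint rmp_regret (v : nat -> A -> R) (t : nat) : A -> R :=
  match t with
  | 0 => fun _ => 0
  | t'.+1 => let q := rmp_regret v t' in
             fun a => pos_part (q a + v t' a - dot (sigma_rm q) (v t'))
  end.

Definition rmp_policy (v : nat -> A -> R) (t : nat) : A -> R :=
  sigma_rm (rmp_regret v t).

End RM.

(* Main.v *)
Require Import Defs.
From mathcomp Require Import all_boot all_order all_algebra.
From mathcomp Require Import ring lra.
From Stdlib Require Import FunctionalExtensionality.
Import Order.TTheory GRing.Theory Num.Theory.
Local Open Scope ring_scope.

Section Core.
Variables (R : realFieldType) (A : finType) (a0 : A).

Lemma pp_ge0 (x : R) : 0 <= pos_part x.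
Proof. by rewrite /pos_part le_max lexx orbT. Qed.

Lemma pp_pos (x : R) : 0 < x -> pos_part x = x.
Proof. by move=> h; rewrite /pos_part max_l // ltW. Qed.

Lemma pp_npos (x : R) : x <= 0 -> pos_part x = 0.
Proof. by move=> h; rewrite /pos_part max_r. Qed.

Lemma pp_mono (x w : R) : 0 <= (pos_part (x + w) - pos_part x) * w.
Proof.
case: (ltP 0 x) => hx; case: (ltP 0 (x + w)) => hz.
- rewrite (pp_pos _ hx) (pp_pos _ hz); nra.
- rewrite (pp_pos _ hx) (pp_npos _ hz); nra.
- rewrite (pp_npos _ hx) (pp_pos _ hz); nra.
- rewrite (pp_npos _ hx) (pp_npos _ hz); nra.
Qed.


Lemma core (x v : A -> R) :
  dot (sigma_rm x) v <= dot (sigma_rm (fun a => x a + v a - dot (sigma_rm x) v)) v.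
Proof.
set c := dot (sigma_rm x) v.
set w := fun a => v a - c.
have key : \sum_a pos_part (x a) * w a = 0.
  rewrite /w /c /dot /sigma_rm.
  case: ifP => [/existsP [b hb]|/existsP hn].
    set S := \sum_b pos_part (x b).
    have S0 : 0 < S.
      rewrite /S (bigD1 b) //= pp_pos // ltr_wpDr //.
      by apply: sumr_ge0 => i _; apply: pp_ge0.
    under eq_bigr => a _ do rewrite mulrBr.
    rewrite sumrB -mulr_suml.
    under [X in _ * X]eq_bigr => a _ do rewrite mulrAC.
    rewrite -mulr_suml -/S.
    by rewrite mulrC divfK ?gt_eqF // subrr.
  apply: big1 => a _; rewrite pp_npos ?mul0r //.
  by rewrite leNgt; apply/negP => h; apply: hn; exists a.
have mono : forall a, 0 <= (pos_part (x a + w a) - pos_part (x a)) * w a.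
  by move=> a; apply: pp_mono.
have zE : (fun a => x a + v a - c) = (fun a => x a + w a).
  by apply: functional_extensionality => a; rewrite /w addrA.
rewrite zE.
have n0 : (0 < #|A|)%N by apply/card_gt0P; exists a0.
have nR : (#|A|%:R : R) != 0 by rewrite pnatr_eq0 -lt0n.
rewrite {1}/sigma_rm.
case: ifP => [/existsP [b hb]|/existsP hn].
  set S := \sum_b pos_part (x b + w b).
  have S0 : 0 < S.
    rewrite /S (bigD1 b) //= pp_pos // ltr_wpDr //.
    by apply: sumr_ge0 => i _; apply: pp_ge0.
  have H1 : 0 <= \sum_a pos_part (x a + w a) * w a.
    have : 0 <= \sum_a (pos_part (x a + w a) - pos_part (x a)) * w a.
      by apply: sumr_ge0 => a _; apply: mono.
    under eq_bigr => a _ do rewrite mulrBl.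
    by rewrite sumrB key subr0.
  have H2 : \sum_a pos_part (x a + w a) * w a
        = \sum_a pos_part (x a + w a) * v a - c * S.
    rewrite /w /S.
    under eq_bigr => a _ do rewrite mulrBr.
    by rewrite sumrB mulr_sumr; congr (_ - _); apply: eq_bigr => a _; rewrite mulrC.
  rewrite /dot.
  under eq_bigr => a _ do rewrite mulrAC.
  rewrite -mulr_suml ler_pdivlMr //.
  by move: H1; rewrite H2 subr_ge0.
case: (boolP [exists a, 0 < x a]) => [/existsP [b hb]|/existsP hx].
  exfalso.
  have hz : forall a, x a + w a <= 0.
    by move=> a; rewrite leNgt; apply/negP => h; apply: hn; exists a.
  have : 0 < \sum_a (pos_part (x a + w a) - pos_part (x a)) * w a.
    rewrite (bigD1 b) //= ltr_wpDr //; first by apply: sumr_ge0 => a _; apply: mono.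
    rewrite pp_npos ?hz // pp_pos // sub0r.
    have := hz b; nra.
  under eq_bigr => a _ do rewrite mulrBl.
  rewrite sumrB key subr0 big1 ?ltxx // => a _.
  by rewrite pp_npos ?hz ?mul0r.
rewrite /c /sigma_rm.
have -> : [exists a, 0 < x a] = false by apply/existsP.
by [].
Qed.

Lemma pp_sigma (z : A -> R) :
  dot (sigma_rm (fun a => pos_part (z a))) = dot (sigma_rm z).
Proof.
have E : [exists a, 0 < pos_part (z a)] = [exists a, 0 < z a].
  apply: eq_existsb => a.
  case: (ltP 0 (z a)) => h; first by rewrite pp_pos.
  by rewrite pp_npos // ltxx.
have P : forall a, pos_part (pos_part (z a)) = pos_part (z a).
  by move=> a; rewrite /pos_part (max_l (pp_ge0 _)).
rewrite /sigma_rm E; case: ifP => // _.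
congr dot; apply: functional_extensionality => a; rewrite P; congr (_ / _).
by apply: eq_bigr => b _; rewrite P.
Qed.

End Core.

Theorem theorem2 (R : realFieldType) (A : finType) (a0 : A)
    (v : nat -> A -> R) (t : nat) :
  dot (rm_policy v t) (v t) <= dot (rm_policy v t.+1) (v t) /\
  dot (rmp_policy v t) (v t) <= dot (rmp_policy v t.+1) (v t).
Proof.
split.
  exact: (@core R A a0 (rm_regret v t) (v t)).
have H := @core R A a0 (rmp_regret v t) (v t).
have E := @pp_sigma R A (fun a => rmp_regret v t a + v t a - dot (sigma_rm (rmp_regret v t)) (v t)).
rewrite /rmp_policy -[rmp_regret v t.+1]/(fun a => pos_part (rmp_regret v t a + v t a - dot (sigma_rm (rmp_regret v t)) (v t))).
by rewrite E.
Qed.
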